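(* Let $(\mathcal G,k)$ be a quadratic Lie algebra, $f$ a linear endomorphism of $\mathcal G$ with $f([x,y])-[f(x),f(y)]\in\mathcal Z(\mathcal G)$ for all $x,y$, and $d$ an invertible linear endomorphism of $\mathcal G$ with $d[x,y]=[dx,fy]+[fx,dy]$ for all $x,y\in\mathcal G$. Then the left invariant semi-Riemannian metric on any connected Lie group with Lie algebra $\mathcal G$ defined by $\langle x,y\rangle=k(dx,dy)$ is flat, and its Levi-Civita product is $xy=d^{-1}[fx,dy]$.
   Context: A quadratic Lie algebra $(\mathcal G,k)$ is a real Lie algebra with a nondegenerate symmetric bilinear form $k$ such that each $\mathrm{ad}_x$ is $k$-skew-symmetric. $\mathcal Z(\mathcal G)$ is the center. The Levi-Civita product is the bilinear product on $\mathcal G$ given by $(xy)^+=\nabla_{x^+}y^+$ for the Levi-Civita connection $\nabla$ and left invariant vector fields $x^+$; it is characterized by the Koszul formula $2\langle xy,z\rangle=\langle[x,y],z\rangle-\langle[y,z],x\rangle+\langle[z,x],y\rangle$. *)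

(* Defs.v *)
From HB Require Import structures.
From mathcomp Require Import all_boot all_order all_algebra.
Set Implicit Arguments. Unset Strict Implicit. Unset Printing Implicit Defensive.
Import Order.TTheory GRing.Theory Num.Theory.
Local Open Scope ring_scope.

Section LieDefs.
Variables (R : realFieldType) (V : vectType R).

Definition bilinear_vmap (b : V -> V -> V) : Prop :=
  (forall (a : R) (x y z : V), b (a *: x + y) z = a *: b x z + b y z) /\
  (forall (a : R) (x y z : V), b x (a *: y + z) = a *: b x y + b x z).

Definition bilinear_form (k : V -> V -> R) : Prop :=
  (forall (a : R) (x y z : V), k (a *: x + y) z = a * k x z + k y z) /\
  (forall (a : R) (x y z : V), k x (a *: y + z) = a * k x y + k x z).

Definition is_lie_bracket (br : V -> V -> V) : Prop :=
  [/\ bilinear_vmap br,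
      (forall x, br x x = 0) &
      (forall x y z, br x (br y z) + br y (br z x) + br z (br x y) = 0)].

Definition is_quadratic_lie (br : V -> V -> V) (k : V -> V -> R) : Prop :=
  [/\ is_lie_bracket br,
      bilinear_form k,
      (forall x y, k x y = k y x),
      (forall x, (forall y, k x y = 0) -> x = 0) &
      (forall x y z, k (br x y) z = - k y (br x z))].

Definition in_center (br : V -> V -> V) (z : V) : Prop := forall y, br z y = 0.

(** [prod] is the Levi-Civita product of the left invariant metric [g]
    (Koszul formula). *)
Definition levi_civita_product (br : V -> V -> V) (g : V -> V -> R)
    (prod : V -> V -> V) : Prop :=
  forall x y z,
    2%:R * g (prod x y) z = g (br x y) z - g (br y z) x + g (br z x) y.

Definition flat_metric (br : V -> V -> V) (g : V -> V -> R) : Prop :=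
  forall prod, levi_civita_product br g prod ->
  forall x y z, prod x (prod y z) - prod y (prod x z) - prod (br x y) z = 0.

End LieDefs.

(* Main.v *)
Require Import Defs.
From HB Require Import structures.
From mathcomp Require Import all_boot all_order all_algebra.
Import Order.TTheory GRing.Theory Num.Theory.
Local Open Scope ring_scope.

Lemma dbl0 (M : zmodType) (a : M) : a = a + a -> a = 0.
Proof. by move=> /(congr1 (fun t => t - a)); rewrite subrr addrK. Qed.

Section Aux.
Variables (R : realFieldType) (V : vectType R) (br : V -> V -> V) (k : V -> V -> R).
Hypothesis HQ : is_quadratic_lie br k.

Lemma br0r x : br x 0 = 0.
Proof.
case: HQ => [[[_ H2] _ _] _ _ _ _].
have := H2 1 x 0 0; rewrite !scale1r !addr0 ; exact: dbl0.
Qed.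
Lemma br0l x : br 0 x = 0.
Proof.
case: HQ => [[[H1 _] _ _] _ _ _ _].
have := H1 1 0 0 x; rewrite !scale1r !addr0 ; exact: dbl0.
Qed.
Lemma brDr x y z : br x (y + z) = br x y + br x z.
Proof. case: HQ => [[[_ H2] _ _] _ _ _ _]. by rewrite -[y]scale1r H2 !scale1r. Qed.
Lemma brDl x y z : br (x + y) z = br x z + br y z.
Proof. case: HQ => [[[H1 _] _ _] _ _ _ _]. by rewrite -[x]scale1r H1 !scale1r. Qed.
Lemma brNr x y : br x (- y) = - br x y.
Proof.
case: HQ => [[[_ H2] _ _] _ _ _ _].
by have := H2 (-1) x y 0; rewrite !scaleN1r !addr0 br0r addr0.
Qed.
Lemma brNl x y : br (- x) y = - br x y.
Proof.
case: HQ => [[[H1 _] _ _] _ _ _ _].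
by have := H1 (-1) x 0 y; rewrite !scaleN1r !addr0 br0l addr0.
Qed.
Lemma brC x y : br x y = - br y x.
Proof.
case: HQ => [[_ H0 _] _ _ _ _].
have := H0 (x + y); rewrite brDl !brDr !H0 add0r addr0 => /eqP.
by rewrite addr_eq0 => /eqP.
Qed.

Lemma k0r x : k x 0 = 0.
Proof.
case: HQ => [_ [_ H2] _ _ _].
have := H2 1 x 0 0; rewrite !scale1r !addr0 mul1r ; exact: dbl0.
Qed.
Lemma k0l x : k 0 x = 0.
Proof.
case: HQ => [_ [H1 _] _ _ _].
have := H1 1 0 0 x; rewrite !scale1r !addr0 mul1r ; exact: dbl0.
Qed.
Lemma kDl x y z : k (x + y) z = k x z + k y z.
Proof. case: HQ => [_ [H1 _] _ _ _]. by rewrite -[x]scale1r H1 mul1r !scale1r. Qed.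
Lemma kNl x y : k (- x) y = - k x y.
Proof.
case: HQ => [_ [H1 _] _ _ _].
by have := H1 (-1) x 0 y; rewrite !scaleN1r !addr0 k0l addr0 mulN1r.
Qed.
Lemma kNr x y : k x (- y) = - k x y.
Proof.
case: HQ => [_ [_ H2] _ _ _].
by have := H2 (-1) x y 0; rewrite !scaleN1r !addr0 k0r addr0 mulN1r.
Qed.
Lemma kcyc a b c : k (br a b) c = k (br c a) b.
Proof.
case: HQ => [_ _ Hs _ Hi].
by rewrite Hi -kNr -brC Hs.
Qed.
End Aux.
Arguments br0r {R V br k}.
Arguments br0l {R V br k}.
Arguments brDr {R V br k}.
Arguments brDl {R V br k}.
Arguments brNr {R V br k}.
Arguments brNl {R V br k}.
Arguments brC {R V br k}.
Arguments k0r {R V br k}.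
Arguments k0l {R V br k}.
Arguments kDl {R V br k}.
Arguments kNl {R V br k}.
Arguments kNr {R V br k}.
Arguments kcyc {R V br k}.

Theorem mainTheorem15 (R : realFieldType) (V : vectType R)
    (br : V -> V -> V) (k : V -> V -> R)
    (f d : {linear V -> V}) (dinv : V -> V) :
  is_quadratic_lie br k ->
  (forall x y, in_center br (f (br x y) - br (f x) (f y))) ->
  cancel d dinv -> cancel dinv d ->
  (forall x y, d (br x y) = br (d x) (f y) + br (f x) (d y)) ->
  let g := fun x y => k (d x) (d y) in
  flat_metric br g /\
  levi_civita_product br g (fun x y => dinv (br (f x) (d y))).
Proof.
move=> HQ Hc dK Kd Hd g.
have LC : levi_civita_product br g (fun x y => dinv (br (f x) (d y))).
  move=> x y z; rewrite /g Kd !Hd !(kDl HQ).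
  rewrite (kcyc HQ (f y) (d z) (d x)) (kcyc HQ (f x) (d y) (d z)).
  rewrite (kcyc HQ (f z) (d x) (d y)).
  set T1 := k _ (d z); set T5 := k _ (d y); set T3 := k _ (d x).
  rewrite mulr_natl mulr2n (addrC T3 T1) opprD [T1 + T5 + _]addrA [T1 + T5]addrC addrK.
  by rewrite [T5 + T3]addrC addrA subrK.
split=> //.
move=> prod Hp.
have Hprod : forall x y, prod x y = dinv (br (f x) (d y)).
  move=> x y; apply/eqP; rewrite -subr_eq0; apply/eqP.
  set u := _ - _.
  have Hg : forall z, g u z = 0.
    move=> z; have := Hp x y z; rewrite -(LC x y z) => /eqP.
    rewrite -subr_eq0 -mulrBr mulf_eq0 pnatr_eq0 /= => /eqP.
    by rewrite /g linearB /= (kDl HQ) (kNl HQ).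
  have du : d u = 0.
    case: HQ => [_ _ _ Hn _]; apply: Hn => w.
    by have := Hg (dinv w); rewrite /g Kd.
  by rewrite -(dK u) du -{1}(linear0 d) dK.
move=> x y z; rewrite !Hprod.
apply: (can_inj dK); rewrite linear0 !linearB /= !Kd.
have -> : f (br x y) = (f (br x y) - br (f x) (f y)) + br (f x) (f y) by rewrite subrK.
rewrite (brDl HQ) Hc add0r.
have [[_ _ Hj] _ _ _ _] := HQ.
have := Hj (f x) (f y) (d z).
rewrite (brC HQ (d z) (f x)) (brNr HQ) (brC HQ (d z) (br (f x) (f y))).
by move=> H; exact H.
Qed.
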